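(* The two-dimensional subalgebras of ${\rm S}_1$ are exactly $\langle e_1,e_2\rangle$, $\langle e_2,e_3\rangle$ and $\langle e_1,\alpha e_2+e_3\rangle$ ($\alpha\in\mathbb{C}$). Up to automorphisms of ${\rm S}_1$, every two-dimensional subalgebra is equivalent to $\langle e_1,e_2\rangle$ or $\langle e_2,e_3\rangle$.
   Context: ${\rm S}_1$ is the complex algebra with basis $e_1,e_2,e_3$ whose only nonzero products of basis elements are $e_1e_i=e_ie_1=e_i$ ($i=1,2,3$). A subalgebra is a linear subspace closed under multiplication (it need not contain $e_1$). Equivalence up to automorphisms means one is mapped onto the other by an algebra automorphism. $\langle S\rangle$ denotes linear span. *)

(* Defs.v *)
From mathcomp Require Import all_boot all_algebra all_field.
From mathcomp Require Import complex.
From mathcomp Require Import Rstruct.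
Set Implicit Arguments. Unset Strict Implicit. Unset Printing Implicit Defensive.
Import GRing.Theory.
Local Open Scope ring_scope.

Definition C : fieldType := Rdefinitions.R[i].

(* Underlying vector space of S_1: row vectors of length 3 over C;
   coordinate i : 'I_3 is the coefficient of e_(i+1). *)
Definition S1 := 'rV[C]_3.

Definition e (i : 'I_3) : S1 := delta_mx 0 i.
Definition e1 : S1 := e 0.
Definition e2 : S1 := e 1.
Definition e3 : S1 := e 2.

Definition basis_prod (i j : 'I_3) : S1 :=
  if i == 0 then e j else if j == 0 then e i else 0.

Definition S1mul (x y : S1) : S1 :=
  \sum_(i < 3) \sum_(j < 3) (x 0 i * y 0 j) *: basis_prod i j.

Definition is_subalgebra (V : {vspace S1}) : Prop :=
  forall u v, u \in V -> v \in V -> S1mul u v \in V.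

Definition is_automorphism (f : S1 -> S1) : Prop :=
  [/\ (forall (a : C) (x y : S1), f (a *: x + y) = a *: f x + f y),
      bijective f &
      forall x y, f (S1mul x y) = S1mul (f x) (f y)].

Definition maps_onto (f : S1 -> S1) (V W : {vspace S1}) : Prop :=
  forall w, w \in W <-> exists2 v, v \in V & f v = w.

Definition aut_equiv (V W : {vspace S1}) : Prop :=
  exists f, is_automorphism f /\ maps_onto f V W.

(* Main.v *)
Require Import Defs.
From mathcomp Require Import all_boot all_algebra all_field.
From mathcomp Require Import ring.
Set Implicit Arguments. Unset Strict Implicit. Unset Printing Implicit Defensive.
Import GRing.Theory.
Local Open Scope ring_scope.

Definition mk3 (a b c : C) : S1 := \row_(i < 3) [:: a; b; c]`_i.

Lemma mk3_0 a b c : mk3 a b c 0 0 = a. Proof. by rewrite mxE. Qed.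
Lemma mk3_1 a b c : mk3 a b c 0 1 = b. Proof. by rewrite mxE. Qed.
Lemma mk3_2 a b c : mk3 a b c 0 2 = c. Proof. by rewrite mxE. Qed.

Lemma mk3_eta (x : S1) : x = mk3 (x 0 0) (x 0 1) (x 0 2).
Proof.
apply/rowP => j; rewrite mxE; case: j => [[|[|[|]]]] //= Hj.
- by congr (x 0 _); apply/val_inj.
- by congr (x 0 _); apply/val_inj.
- by congr (x 0 _); apply/val_inj.
Qed.

Lemma mk3_inj a b c a' b' c' : mk3 a b c = mk3 a' b' c' -> [/\ a = a', b = b' & c = c'].
Proof.
move=> H; split.
- by have := congr1 (fun x : S1 => x 0 0) H; rewrite !mxE.
- by have := congr1 (fun x : S1 => x 0 1) H; rewrite !mxE.
- by have := congr1 (fun x : S1 => x 0 2) H; rewrite !mxE.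
Qed.

Lemma mk3D a b c a' b' c' : mk3 a b c + mk3 a' b' c' = mk3 (a + a') (b + b') (c + c').
Proof. by apply/rowP => j; rewrite !mxE; case: j => [[|[|[|]]]]. Qed.

Lemma mk3Z k a b c : k *: mk3 a b c = mk3 (k * a) (k * b) (k * c).
Proof. by apply/rowP => j; rewrite !mxE; case: j => [[|[|[|]]]]. Qed.

Lemma mk3N a b c : - mk3 a b c = mk3 (- a) (- b) (- c).
Proof. by apply/rowP => j; rewrite !mxE; case: j => [[|[|[|]]]]. Qed.

Lemma e1E : e1 = mk3 1 0 0.
Proof. by apply/rowP => j; rewrite !mxE; case: j => [[|[|[|]]]]. Qed.
Lemma e2E : e2 = mk3 0 1 0.
Proof. by apply/rowP => j; rewrite !mxE; case: j => [[|[|[|]]]]. Qed.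
Lemma e3E : e3 = mk3 0 0 1.
Proof. by apply/rowP => j; rewrite !mxE; case: j => [[|[|[|]]]]. Qed.

Lemma S1mulE a b c a' b' c' :
  S1mul (mk3 a b c) (mk3 a' b' c') = mk3 (a * a') (a * b' + b * a') (a * c' + c * a').
Proof.
rewrite /S1mul !big_ord_recl !big_ord0 /basis_prod /=.
rewrite -[e (lift _ _)]/e2 -[e (lift _ (lift _ _))]/e3 -[e ord0]/e1.
rewrite e1E e2E e3E ![mk3 a b c 0 _]mxE ![mk3 a' b' c' 0 _]mxE /= !scaler0 !addr0 !mk3Z !mk3D.
congr mk3; ring. Qed.

Lemma span2P (a b u : S1) :
  (u \in <<[:: a; b]>>%VS) <-> (exists k1 k2, u = k1 *: a + k2 *: b).
Proof.
rewrite span_cons span_seq1; split.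
- by move/memv_addP => [x /vlineP [k1 ->] [y /vlineP [k2 ->] ->]]; exists k1, k2.
- by move=> [k1 [k2 ->]]; apply: memv_add; apply: rpredZ; apply: memv_line.
Qed.

Lemma notin_line (x y : S1) (i : 'I_3) : x 0 i != 0 -> y 0 i = 0 -> x \notin <[y]>%VS.
Proof.
move=> Hx Hy; apply/negP => /vlineP [k Hk]; move: Hx; rewrite Hk mxE Hy mulr0.
by rewrite eqxx.
Qed.

Lemma nz_vec (y : S1) (i : 'I_3) : y 0 i != 0 -> y != 0.
Proof. by apply: contraNneq => ->; rewrite mxE. Qed.

Lemma dim2 (a b : S1) : a \notin <[b]>%VS -> b != 0 -> \dim <<[:: a; b]>> = 2%N.
Proof.
move=> Ha Hb; have : free [:: a; b] by rewrite free_cons span_seq1 Ha seq1_free Hb.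
by move/eqP.
Qed.

Lemma mk3_sum a b c : mk3 a b c = a *: e1 + b *: e2 + c *: e3.
Proof. by rewrite e1E e2E e3E !mk3Z !mk3D; congr mk3; ring. Qed.

Lemma eqV2 (V : {vspace S1}) (a b : S1) :
  \dim V = 2%N -> a \in V -> b \in V -> a \notin <[b]>%VS -> b != 0 ->
  V = <<[:: a; b]>>%VS.
Proof.
move=> HV Ha Hb Hab Hb0; apply/eqP; rewrite eq_sym eqEdim dim2 // HV leqnn andbT.
by apply/span_subvP => x; rewrite !inE => /orP[]/eqP->.
Qed.

Section Main.
Lemma classify (V : {vspace S1}) :
  is_subalgebra V -> \dim V = 2%N ->
  [\/ V = <<[:: e1; e2]>>%VS,
         V = <<[:: e2; e3]>>%VS |
         exists alpha : C, V = <<[:: e1; (alpha *: e2 + e3)%R]>>%VS].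
Proof.
move=> HS HV.
have He1v : e1 != 0 by apply: (@nz_vec _ 0); rewrite e1E mxE /= oner_eq0.
case: (boolP (e1 \in V)) => He1.
- have : ~~ (V <= <[e1]>)%VS.
    apply/negP => H; have := dimvS H; rewrite dim_vline He1v HV //.
  move/subvPn => [v Hv Hnv]; rewrite (mk3_eta v) in Hv Hnv.
  move: (v 0 0) (v 0 1) (v 0 2) Hv Hnv => a b c Hv Hnv.
  have Hw : mk3 0 b c \in V.
    suff -> : mk3 0 b c = mk3 a b c - a *: e1 by rewrite rpredB ?rpredZ.
    by rewrite e1E mk3Z mk3N mk3D; congr mk3; ring.
  case: (eqVneq c 0) => Hc.
  + have Hb : b != 0.
      apply/negP => /eqP Hb; move: Hnv; rewrite Hb Hc.
      have -> : mk3 a 0 0 = a *: e1 by rewrite e1E mk3Z; congr mk3; ring.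
      by rewrite memvZ ?memv_line // orbT.
    have He2 : e2 \in V.
      have -> : e2 = b^-1 *: mk3 0 b c by rewrite e2E mk3Z Hc; congr mk3; rewrite ?mulr0 ?mulVf.
      exact: rpredZ.
    apply: Or31; apply: eqV2 => //.
      by apply: (@notin_line _ _ 0); rewrite ?e1E ?e2E ?e3E ?mk3Z ?mk3D !mxE /= ?mulr0 ?mulr1 ?addr0 ?add0r ?oner_eq0.
    by apply: (@nz_vec _ 1); rewrite ?e1E ?e2E ?e3E ?mk3Z ?mk3D !mxE /= ?mulr0 ?mulr1 ?addr0 ?add0r ?oner_eq0.
  + apply: Or33; exists (b / c).
    have Hu : (b / c) *: e2 + e3 = c^-1 *: mk3 0 b c.
      rewrite e2E e3E !mk3Z mk3D; congr mk3; rewrite ?mulr0 ?mulVf //; try ring.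
    apply: eqV2 => //.
    + by rewrite Hu rpredZ.
    + by apply: (@notin_line _ _ 0); rewrite ?e1E ?e2E ?e3E ?mk3Z ?mk3D !mxE /= ?mulr0 ?mulr1 ?addr0 ?add0r ?oner_eq0.
    + by apply: (@nz_vec _ 2); rewrite ?e1E ?e2E ?e3E ?mk3Z ?mk3D !mxE /= ?mulr0 ?mulr1 ?addr0 ?add0r ?oner_eq0.
- have Hx0 : forall x, x \in V -> x 0 0 = 0.
    move=> x Hx; apply/eqP; apply/negPn/negP => Ha.
    have := rpredB (HS x x Hx Hx) (rpredZ (2 * x 0 0) Hx).
    rewrite (mk3_eta x) S1mulE mk3Z mk3N mk3D.
    move: (x 0 0) (x 0 1) (x 0 2) Ha => a b c Ha H.
    have : e1 \in V.
      have -> : e1 = (- (a * a))^-1 *: mk3 (a * a + - (2 * a * a)) (a * b + b * a + - (2 * a * b)) (a * c + c * a + - (2 * a * c)).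
        rewrite e1E mk3Z; congr mk3.
        * have -> : a * a + - (2 * a * a) = - (a * a) by ring.
          by rewrite mulVf // oppr_eq0 mulf_neq0.
        * have -> : a * b + b * a + - (2 * a * b) = 0 by ring.
          by rewrite mulr0.
        * have -> : a * c + c * a + - (2 * a * c) = 0 by ring.
          by rewrite mulr0.
      by rewrite rpredZ //; rewrite mk3_0 in H.
    by move=> H1; rewrite H1 in He1.
  apply: Or32; apply/eqP; rewrite eqEdim HV dim2 ?leqnn ?andbT.
  + apply/subvP => x Hx; rewrite (mk3_eta x) Hx0 // mk3_sum scale0r add0r.
    by apply/span2P; exists (x 0 1), (x 0 2).
  + by apply: (@notin_line _ _ 1); rewrite ?e1E ?e2E ?e3E ?mk3Z ?mk3D !mxE /= ?mulr0 ?mulr1 ?addr0 ?add0r ?oner_eq0.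
  + by apply: (@nz_vec _ 2); rewrite ?e1E ?e2E ?e3E ?mk3Z ?mk3D !mxE /= ?mulr0 ?mulr1 ?addr0 ?add0r ?oner_eq0.
Qed.
End Main.

Lemma sub12 : is_subalgebra <<[:: e1; e2]>>%VS.
Proof.
move=> u v /span2P [k1 [k2 ->]] /span2P [l1 [l2 ->]]; apply/span2P.
exists (k1 * l1), (k1 * l2 + k2 * l1).
by rewrite e1E e2E !mk3Z !mk3D ?mk3Z ?mk3D S1mulE ?mk3Z ?mk3D; congr mk3; ring.
Qed.

Lemma sub23 : is_subalgebra <<[:: e2; e3]>>%VS.
Proof.
move=> u v /span2P [k1 [k2 ->]] /span2P [l1 [l2 ->]]; apply/span2P.
exists 0, 0.
by rewrite e3E e2E !mk3Z !mk3D ?mk3Z ?mk3D S1mulE ?mk3Z ?mk3D; congr mk3; ring.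
Qed.

Lemma sub1a alpha : is_subalgebra <<[:: e1; (alpha *: e2 + e3)%R]>>%VS.
Proof.
move=> u v /span2P [k1 [k2 ->]] /span2P [l1 [l2 ->]]; apply/span2P.
exists (k1 * l1), (k1 * l2 + k2 * l1).
by rewrite e1E e3E e2E !mk3Z !mk3D ?mk3Z ?mk3D S1mulE ?mk3Z ?mk3D; congr mk3; ring.
Qed.

Lemma auto_id V : aut_equiv V V.
Proof.
exists id; split; first by split => //; exists id.
by move=> w; split; [exists w | case=> v Hv <-].
Qed.

Definition fa (alpha : C) (x : S1) : S1 := mk3 (x 0 0) (x 0 2) (x 0 1 - alpha * x 0 2).
Definition ga (alpha : C) (x : S1) : S1 := mk3 (x 0 0) (x 0 2 + alpha * x 0 1) (x 0 1).

Lemma fa_mk3 alpha a b c : fa alpha (mk3 a b c) = mk3 a c (b - alpha * c).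
Proof. by rewrite /fa !mxE. Qed.

Lemma auto_a alpha : aut_equiv <<[:: e1; (alpha *: e2 + e3)%R]>>%VS <<[:: e1; e2]>>%VS.
Proof.
exists (fa alpha); split; first split.
- move=> a x y; rewrite /fa !mxE mk3Z mk3D; congr mk3; ring.
- exists (ga alpha) => x; rewrite /fa /ga !mxE /=; rewrite [RHS]mk3_eta; congr mk3; ring.
- move=> x y; rewrite (mk3_eta x) (mk3_eta y) S1mulE /fa !mxE /= S1mulE; congr mk3; ring.
move=> w; split.
- move/span2P => [k1 [k2 ->]]; exists (k1 *: e1 + k2 *: (alpha *: e2 + e3)).
    by apply/span2P; exists k1, k2.
  by rewrite e1E e2E e3E !mk3Z !mk3D ?mk3Z ?mk3D fa_mk3; congr mk3; ring.
- case=> v /span2P [k1 [k2 ->]] <-; apply/span2P; exists k1, k2.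
  by rewrite e1E e2E e3E !mk3Z !mk3D ?mk3Z ?mk3D fa_mk3; congr mk3; ring.
Qed.

Theorem mainTheorem15 :
  (forall V : {vspace S1},
     (is_subalgebra V /\ \dim V = 2%N) <->
     [\/ V = <<[:: e1; e2]>>%VS,
         V = <<[:: e2; e3]>>%VS |
         exists alpha : C, V = <<[:: e1; (alpha *: e2 + e3)%R]>>%VS])
  /\
  (forall V : {vspace S1},
     is_subalgebra V -> \dim V = 2%N ->
     aut_equiv V <<[:: e1; e2]>>%VS \/ aut_equiv V <<[:: e2; e3]>>%VS).
Proof.
split.
- move=> V; split; first by case=> HS HV; apply: classify.
  case=> [->|->|[alpha ->]]; split.
  + exact: sub12.
  + apply: dim2.
      by apply: (@notin_line _ _ 0); rewrite ?e1E ?e2E ?e3E ?mk3Z ?mk3D !mxE /= ?mulr0 ?mulr1 ?addr0 ?add0r ?oner_eq0.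
    by apply: (@nz_vec _ 1); rewrite ?e1E ?e2E ?e3E ?mk3Z ?mk3D !mxE /= ?mulr0 ?mulr1 ?addr0 ?add0r ?oner_eq0.
  + exact: sub23.
  + apply: dim2.
      by apply: (@notin_line _ _ 1); rewrite ?e1E ?e2E ?e3E ?mk3Z ?mk3D !mxE /= ?mulr0 ?mulr1 ?addr0 ?add0r ?oner_eq0.
    by apply: (@nz_vec _ 2); rewrite ?e1E ?e2E ?e3E ?mk3Z ?mk3D !mxE /= ?mulr0 ?mulr1 ?addr0 ?add0r ?oner_eq0.
  + exact: sub1a.
  + apply: dim2.
      by apply: (@notin_line _ _ 0); rewrite ?e1E ?e2E ?e3E ?mk3Z ?mk3D !mxE /= ?mulr0 ?mulr1 ?addr0 ?add0r ?oner_eq0.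
    by apply: (@nz_vec _ 2); rewrite ?e1E ?e2E ?e3E ?mk3Z ?mk3D !mxE /= ?mulr0 ?mulr1 ?addr0 ?add0r ?oner_eq0.
- move=> V HS HV; case: (classify HS HV) => [->|->|[alpha ->]].
  + by left; apply: auto_id.
  + by right; apply: auto_id.
  + by left; apply: auto_a.
Qed.
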